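(* Assume the Standing Hypothesis (S). Then $G_v\cap L$ is not isomorphic to $\mathrm{C}_{q+\sqrt{2q}+1}:4$ nor to $\mathrm{C}_{q-\sqrt{2q}+1}:4$ (the maximal subgroups of $L$ that are semidirect products of a cyclic group of order $q\pm\sqrt{2q}+1$ by a cyclic group of order $4$).
   Context: Standing Hypothesis (S): $n\geq 1$, $q=2^{2n+1}$, $L=\mathrm{Sz}(q)$ (the Suzuki group), $G=L:m$ with $m$ a divisor of $2n+1$ (extension by field automorphisms, so $L\leq G\leq\mathrm{Aut}(L)=L:(2n+1)$). $\Gamma$ is a finite digraph with at least one arc, $G\leq\mathrm{Aut}(\Gamma)$ acts primitively on the vertices and transitively on the $s$-arcs of $\Gamma$ for some $s\geq 2$, and $v$ is a vertex with stabiliser $G_v$ (a maximal subgroup of $G$ not containing $L$). A digraph is a finite set with an anti-symmetric irreflexive relation $\to$; an $s$-arc is a sequence $v_0,\dots,v_s$ with $v_i\to v_{i+1}$. $\mathrm{C}_k$ is the cyclic group of order $k$. *)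

(* Defs.v *)
From mathcomp Require Import all_boot all_algebra all_fingroup all_solvable all_field.
Set Implicit Arguments.
Unset Strict Implicit.
Unset Printing Implicit Defensive.
Import GRing.Theory.

(* ---------- The Suzuki group Sz(q), q = 2^(2n+1), as a group of 4x4 matrices
   over a finite field F with #|F| = q (Wilson, "The Finite Simple Groups",
   Sect. 4.2).  theta : x |-> x^(2^(n+1)) is the field automorphism with
   theta^2 = Frobenius. ---------- *)
Section Suzuki.
Variables (F : finFieldType) (n : nat).
Local Open Scope ring_scope.

Definition sz_theta (x : F) : F := x ^+ (2 ^ n.+1).

Definition sz_S (a b : F) : 'M[F]_4 :=
  \matrix_(i < 4, j < 4)
    match nat_of_ord i, nat_of_ord j with
    | 0, 0 => 1 | 1, 1 => 1 | 2, 2 => 1 | 3, 3 => 1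
    | 1, 0 => a
    | 2, 0 => b
    | 2, 1 => sz_theta a
    | 3, 0 => a ^+ 2 * sz_theta a + a * b + sz_theta b
    | 3, 1 => a * sz_theta a + b
    | 3, 2 => a
    | _, _ => 0
    end.

Definition sz_D (l : F) : 'M[F]_4 :=
  \matrix_(i < 4, j < 4)
    if i == j then
      match nat_of_ord i with
      | 0 => l ^+ (1 + 2 ^ n)
      | 1 => l ^+ (2 ^ n)
      | 2 => (l ^+ (2 ^ n))^-1
      | _ => (l ^+ (1 + 2 ^ n))^-1
      end
    else 0.

Definition sz_W : 'M[F]_4 :=
  \matrix_(i < 4, j < 4) if (i + j == 3)%N then 1 else 0.

Definition sz_gen (M : 'M[F]_4) : bool :=
  [|| [exists a, exists b, M == sz_S a b],
      [exists l : F, (l != 0) && (M == sz_D l)] | M == sz_W].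

Definition SzSet : {set {'GL_4[F]}} := [set u : {'GL_4[F]} | sz_gen (GLval u)].

Definition Suzuki : {group {'GL_4[F]}} := <<SzSet>>%G.
End Suzuki.

Section Digraph.
Variable V : finType.

Definition is_digraph (arc : rel V) : Prop :=
  (forall x, ~~ arc x x) /\ (forall x y, arc x y -> ~~ arc y x).

Definition is_sarc (arc : rel V) (s : nat) (p : seq V) : bool :=
  (size p == s.+1) && (if p is x :: p' then path arc x p' else false).
End Digraph.

Local Open Scope group_scope.

Definition acts_as_automorphisms (gT : finGroupType) (V : finType)
  (A : {set gT}) (to : {action gT &-> V}) (arc : rel V) : Prop :=
  [faithful A, on [set: V] | to] /\
  (forall g, g \in A -> forall x y, arc (to x g) (to y g) = arc x y).

Definition sarc_transitive (gT : finGroupType) (V : finType)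
  (A : {set gT}) (to : {action gT &-> V}) (arc : rel V) (s : nat) : Prop :=
  forall p p' : seq V, is_sarc arc s p -> is_sarc arc s p' ->
    exists2 g, g \in A & map (fun x => to x g) p = p'.

(* H is isomorphic to C_k : 4, the semidirect product of a cyclic group of
   order k by a cyclic group of order 4 acting by x |-> x^q (the structure of
   the maximal subgroups C_{q +- sqrt(2q) + 1} : 4 of Sz(q)). *)
Definition is_Ck_rtimes_4 (gT : finGroupType) (H : {set gT}) (k q : nat) : Prop :=
  exists (K : {group gT}) (y : gT),
    [/\ cyclic K, #|K| = k, #[y] = 4%N, K ><| <[y]> = H &
        forall x, x \in K -> x ^ y = x ^+ q].

(* Main.v *)
Require Import Defs.
From mathcomp Require Import all_boot all_algebra all_fingroup all_solvable all_field.
From mathcomp Require Import ring zify.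
Local Open Scope group_scope.

Lemma bnd (n : nat) : (1 <= n)%N ->
  let k1 := (2 ^ (2 * n + 1) + 2 ^ n.+1 + 1)%N in
  let k2 := (2 ^ (2 * n + 1) - 2 ^ n.+1 + 1)%N in
  [/\ odd k1, odd k2, (2 * n + 1 < k1)%N & (2 * n + 1 < k2)%N].
Proof.
move=> n1 /=.
have e1 : (2 ^ (2 * n + 1) = 2 * (2 ^ n * 2 ^ n))%N.
  have -> : (2 * n + 1 = n + n + 1)%N by lia.
  by rewrite !expnD expn1; ring.
have e2 : (2 ^ n.+1 = 2 * 2 ^ n)%N by rewrite expnS.
have lt := ltn_expl n (isT : (1 < 2)%N).
have a2 : (2 <= 2 ^ n)%N by rewrite -(expn1 2) leq_exp2l.
rewrite e1 e2; move: lt a2; set a := (2 ^ n)%N => lt a2.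
have e3 : (2 * (a * a) - 2 * a = 2 * (a * a - a))%N by rewrite mulnBr.
rewrite e3 -mulnDr !addn1 /= !oddM /=; split => //; nia.
Qed.

Lemma two_arc_trans {gT : finGroupType} {V : finType} {arc : rel V}
  {to : {action gT &-> V}} {G : {set gT}} {s : nat} :
  (2 <= s)%N -> (forall z, exists t, arc z t) -> sarc_transitive G to arc s ->
  forall a b c a' b' c', arc a b -> arc b c -> arc a' b' -> arc b' c' ->
  exists2 g, g \in G & [/\ to a g = a', to b g = b' & to c g = c'].
Proof.
case: s => [|[|s']] // _ hout st a b c a' b' c' ab bc ab' bc'.
pose f z := odflt z [pick t | arc z t].
have hf z : arc z (f z).
  rewrite /f; case: pickP => //= H; have [t] := hout z; by rewrite H.
have ext x y z : arc x y -> arc y z -> is_sarc arc s'.+2 [:: x, y, z & traject f (f z) s'].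
  move=> xy yz; rewrite /is_sarc /= size_traject eqxx /= xy yz /=.
  apply: (sub_path _ (fpath_traject f z s')) => p q /= /eqP <-; exact: hf.
have [g Gg] := st _ _ (ext _ _ _ ab bc) (ext _ _ _ ab' bc').
by move=> [e1 e2 e3 _]; exists g.
Qed.

Lemma arith {k x a b t m l d i r : nat} : (0 < k)%N -> odd k -> (0 < l)%N -> (0 < x)%N ->
  (b * a = x * t)%N -> (a * k %| x)%N -> (b * k %| x)%N -> x = (k * 4 * m)%N ->
  (l * x = d * (k * 4))%N -> (d %| l * i)%N -> (i %| r)%N -> (k %| r)%N.
Proof.
move=> k0 ok l0 x0 hba ha hb hx hl hd hi.
have h1 : (x * (t * (k * k)) %| x * x)%N.
  have := dvdn_mul ha hb.
  have e : (x * (t * (k * k)) = a * k * (b * k))%N.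
    by rewrite mulnA -hba; ring.
  by rewrite e.
rewrite dvdn_pmul2l // in h1.
have h2 : (k * k %| x)%N := dvdn_trans (dvdn_mull t (dvdnn _)) h1.
have h3 : (k %| m)%N.
  move: h2; rewrite hx -mulnA dvdn_pmul2l // Gauss_dvdr //.
  by rewrite (_ : 4 = 2 ^ 2)%N // coprimeXr // coprimen2.
have h4 : d = (l * m)%N.
  apply/eqP; rewrite -(eqn_pmul2r (_ : 0 < k * 4)%N) ?muln_gt0 ?k0 //.
  by rewrite -hl hx; apply/eqP; ring.
rewrite h4 dvdn_pmul2l // in hd.
exact: dvdn_trans h3 (dvdn_trans hd hi).
Qed.

Lemma key (gT : finGroupType) (L G : {group gT})
  (V : finType) (arc : rel V) (to : {action gT &-> V}) (s : nat) (v : V) (k r q : nat) :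
  L <| G -> (#|G : L| %| r)%N -> (0 < r)%N ->
  is_digraph arc -> (exists x y, arc x y) ->
  acts_as_automorphisms G to arc ->
  [primitive G, on [set: V] | to] ->
  (2 <= s)%N -> sarc_transitive G to arc s ->
  odd k -> (r < k)%N ->
  ~ is_Ck_rtimes_4 ('C_G[v | to] :&: L) k q.
Proof.
move=> nLG iGL r0 [irr _] [x0 [y0 a0]] [faith autG] primG s2 sarc oddk rk.
move=> [K [y [cycK cardK oy sdp _]]].
have trG : [transitive G, on [set: V] | to] by case/andP: primG.
have := primG; rewrite (trans_prim_astab (in_setT v) trG) => /maximal_eqP[_ maxX].
set X := 'C_G[v | to].
have hout z : exists t, arc z t.
  have [h Gh ->] := atransP2 trG (in_setT x0) (in_setT z).
  by exists (to y0 h); rewrite (autG _ Gh).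
have [h Gh ev] := atransP2 trG (in_setT y0) (in_setT v).
set u := to x0 h.
have uv : arc u v by rewrite ev (autG _ Gh).
have [h' Gh' ev'] := atransP2 trG (in_setT x0) (in_setT v).
set w := to y0 h'.
have vw : arc v w by rewrite ev' (autG _ Gh').
have [t wt] := hout w.
have [g Gg [ug vg _]] := two_arc_trans s2 hout sarc _ _ _ _ _ _ uv vw vw wt.
have neuv : u != v by apply: contraTneq uv => ->; exact: irr.
have sXG : X \subset G := subsetIl _ _.
have inC (H : {set gT}) x z : (z \in 'C_H[x|to]) = (z \in H) && (to x z == x).
  by rewrite inE (sameP astab1P eqP).
pose A := 'C_X[u | to]%G. pose B := 'C_X[w | to]%G.
have sAX : A \subset X := subsetIl _ _.
have sBX : B \subset X := subsetIl _ _.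
have XBA : X \subset B * A.
  apply/subsetP => a Xa.
  have [Ga cva] : a \in G /\ to v a = v by move: Xa; rewrite inE => /andP[-> /astab1P].
  have vwa : arc v (to w a) by rewrite -{1}cva (autG _ Ga).
  have [b Gb [ub vb wb]] := two_arc_trans s2 hout sarc _ _ _ _ _ _ uv vw uv vwa.
  rewrite -(mulgKV b a); apply: mem_mulg.
    by rewrite !inC groupM ?groupV //= !actM cva -{1}vb -wb !actK !eqxx.
  by rewrite !inC Gb vb ub !eqxx.
have [nKN _ _ _ _] := sdprod_context sdp.
have sKN : K \subset X :&: L := normal_sub nKN.
have cardN : #|X :&: L| = (k * 4)%N by rewrite /X -(sdprod_card sdp) cardK; congr (_ * _)%N. 
have k0 : (0 < k)%N by case: k oddk {rk cardK cardN}.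
have nNX : X :&: L <| X := normalGI sXG nLG.
have hall : (2^').-Hall(X :&: L) K.
  rewrite /pHall sKN /pgroup cardK p'natE // dvdn2 oddk /=.
  have := Lagrange sKN; rewrite cardN cardK => /eqP; rewrite eqn_pmul2l // => /eqP ->.
  by [].
have nKX : K <| X.
  rewrite -(normal_Hall_pcore hall nKN); exact: char_normal_trans (pcore_char _ _) nNX.
have memK z : (z \in K) = (z \in X :&: L) && (2^').-elt z.
  apply/idP/andP => [zK|[zN]]; last by rewrite (mem_normal_Hall hall nKN).
  have zN : z \in X :&: L := subsetP sKN z zK.
  by rewrite zN -(mem_normal_Hall hall nKN).
have AgB : A :^ g = B.
  rewrite /A /B /= conjIg -astab1_act ug conjIg -astab1_act vg (conjGid Gg); exact: setIAC.
have gNL : g^-1 \in 'N(L) by rewrite groupV (subsetP (normal_norm nLG)).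
have AKg : (A :&: K) :^ g = B :&: K.
  apply/setP => z; rewrite -AgB mem_conjg in_setI [z \in _ :&: K]in_setI mem_conjg; apply: andb_id2l => zA.
  have zB : z \in B by rewrite -AgB mem_conjg.
  have memK' x : (x \in K) = [&& x \in X, x \in L & (2^').-elt x].
    by rewrite memK in_setI andbA.
  rewrite !memK' (subsetP sAX _ zA) (subsetP sBX _ zB) /=.
  by rewrite (memJ_norm _ gNL) p_eltJ.
have BK : B :&: K = A :&: K.
  apply/eqP; have := eq_subG_cyclic cycK (subsetIr B K) (subsetIr A K).
  by rewrite /= -AKg cardJg eqxx => /eqP[->].
have gN : g \in 'N(A :&: K) by apply/normP; rewrite AKg BK.
pose K0 := (A :&: K)%G.
have nK0A : A \subset 'N(K0) := normsI (normG A) (subset_trans sAX (normal_norm nKX)).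
have nK0B : B \subset 'N(K0).
  by rewrite /K0 /= -BK; exact: normsI (normG B) (subset_trans sBX (normal_norm nKX)).
have nK0X : X \subset 'N(K0) := subset_trans XBA (mul_subG nK0B nK0A).
have AK1 : A :&: K = 1.
  have sXM : X \subset 'N_G(K0) by rewrite subsetI sXG nK0X.
  have [MX|MG] := maxX ('N_G(K0))%G sXM (subsetIl _ _).
    have : g \in 'N_G(K0) by rewrite inE Gg gN.
    rewrite MX inC => /andP[_ /eqP vg'].
    by move: neuv; rewrite (act_inj to g (etrans ug (esym vg'))) eqxx.
  have nK0G : K0 <| G.
    rewrite /normal (subset_trans (subsetIl _ _) (subset_trans sAX sXG)) /=.
    by rewrite -{1}MG subsetIr.
  have [sub|tr] := prim_trans_norm primG nK0G.
    apply/trivgP; exact: subset_trans sub faith.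
  have [a K0a ea] := atransP2 tr (in_setT v) (in_setT u).
  have : a \in X := subsetP sAX a (subsetP (subsetIl A K) a K0a).
  by rewrite inC => /andP[_ /eqP]; rewrite -ea => euv; move: neuv; rewrite euv eqxx.
have BK1 : B :&: K = 1 by rewrite BK.
have cnt (Y : {group gT}) : Y \subset X -> Y :&: K = 1 -> (#|Y| * k %| #|X|)%N.
  move=> sYX tYK.
  pose YN := (Y :&: (X :&: L))%G.
  have tKYN : K :&: YN = 1 by rewrite /= setIC -setIA (setIidPr sKN) tYK.
  have nKYN : YN \subset 'N(K) := subset_trans (subsetIr _ _) (normal_norm nKN).
  have d1 : (#|K| * #|YN| %| #|X :&: L|)%N.
    rewrite -(TI_cardMg tKYN) -(norm_joinEr nKYN); apply: cardSg.
    by rewrite join_subG sKN subsetIr.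
  have d4 : (#|YN| %| 4)%N by move: d1; rewrite cardN cardK dvdn_pmul2l.
  have nNY : Y \subset 'N(X :&: L) := subset_trans sYX (normal_norm nNX).
  have d2 : (#|X :&: L| * #|Y| %| #|X| * 4)%N.
    rewrite mul_cardG -(norm_joinEr nNY); apply: dvdn_mul.
      by apply: cardSg; rewrite join_subG (normal_sub nNX) sYX.
    by rewrite setIC.
  move: d2; rewrite cardN (_ : (k * 4 * #|Y| = #|Y| * k * 4)%N); last by ring.
  by rewrite dvdn_pmul2r.
have XBA' : B * A = X by apply/eqP; rewrite eqEsubset mul_subG.
have hBA := mul_cardG B A; rewrite XBA' in hBA.
have sNX : X :&: L \subset X := subsetIl _ _.
have hx := Lagrange sNX; rewrite cardN in hx.
have nLX : X \subset 'N(L) := subset_trans sXG (normal_norm nLG).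
have hXL := mul_cardG L X; rewrite -(norm_joinEr nLX) setIC cardN in hXL.
have dXL : (#|L <*> X| %| #|G|)%N by apply: cardSg; rewrite join_subG (normal_sub nLG).
have hG := Lagrange (normal_sub nLG).
have kr : (k %| r)%N.
  have h1 := arith k0 oddk (cardG_gt0 L) (cardG_gt0 _) hBA (cnt A sAX AK1) (cnt B sBX BK1).
  have h2 := h1 _ _ _ _ (esym hx) hXL.
  have dd : (#|L <*> X| %| #|L| * #|G : L|)%N by rewrite hG.
  exact: h2 dd iGL.
by move: (dvdn_leq r0 kr); rewrite leqNgt rk.
Qed.

Theorem lemma4p4
  (n : nat) (F : finFieldType) (gT : finGroupType) (L G : {group gT})
  (V : finType) (arc : rel V) (to : {action gT &-> V}) (s : nat) (v : V) :
  (1 <= n)%N ->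
  #|F| = (2 ^ (2 * n + 1))%N ->
  (* L = Sz(q), L <= G <= Aut(L), G = L:m with m | 2n+1 *)
  L \isog Suzuki F n ->
  L <| G ->
  'C_G(L) = 1 ->
  (#|G : L| %| 2 * n + 1)%N ->
  (* Gamma is a digraph with at least one arc *)
  is_digraph arc ->
  (exists x y, arc x y) ->
  (* G <= Aut(Gamma), primitive on vertices, transitive on s-arcs, s >= 2 *)
  acts_as_automorphisms G to arc ->
  [primitive G, on [set: V] | to] ->
  (2 <= s)%N ->
  sarc_transitive G to arc s ->
  ~ is_Ck_rtimes_4 ('C_G[v | to] :&: L) (2 ^ (2 * n + 1) + 2 ^ n.+1 + 1)
                   (2 ^ (2 * n + 1)) /\
  ~ is_Ck_rtimes_4 ('C_G[v | to] :&: L) (2 ^ (2 * n + 1) - 2 ^ n.+1 + 1)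
                   (2 ^ (2 * n + 1)).
Proof.
move=> n1 _ _ nLG _ iGL dg ex aut prim s2 sarc.
have [o1 o2 l1 l2] := bnd n n1.
have r0 : (0 < 2 * n + 1)%N by rewrite addn1.
split; apply: (@key _ _ _ _ _ _ _ v _ _ _ nLG iGL r0 dg ex aut prim s2 sarc); [exact: o1 | exact: l1 | exact: o2 | exact: l2].
Qed.
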